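(* Let $G=(V,E)$ be a hypergraph and let $k$ and $m$ be integers such that the vertices of $G$ can be $k$-colored so that every hyperedge containing at least $m$ vertices contains a vertex of each of the $k$ colors. Then for every integer $t'>1$, with $k'=\binom{k}{t'}+\sum_{i=0}^{t'-2}\binom{k-1}{i}$ and $m'=\max\{m,k(t'-1)+1\}$, there exists a $k'$-coloring of the $t'$-tuples of vertices of $G$ such that every hyperedge containing at least $m'$ vertices contains a $t'$-tuple of each of the $k'$ colors.
   Context: A $t'$-tuple of vertices is a $t'$-element subset of $V$; a hyperedge contains it if it is a subset of the hyperedge. Binomial coefficients $\binom{a}{b}$ with $b>a$ are $0$. *)

(* Defs.v *)
From mathcomp Require Import all_boot.
Set Implicit Arguments. Unset Strict Implicit. Unset Printing Implicit Defensive.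

Definition polychromatic_vertex_coloring (V : finType) (E : {set {set V}})
    (k m : nat) (c : V -> 'I_k) : Prop :=
  forall e, e \in E -> m <= #|e| -> forall i : 'I_k, exists2 v, v \in e & c v = i.

(* d colors subsets of V (only its values on t-element subsets matter);
   every hyperedge with at least m vertices contains a t-tuple (t-element
   subset of V contained in the hyperedge) of each of the k colors. *)
Definition polychromatic_tuple_coloring (V : finType) (E : {set {set V}})
    (t k m : nat) (d : {set V} -> 'I_k) : Prop :=
  forall e, e \in E -> m <= #|e| -> forall j : 'I_k,
    exists T : {set V}, [/\ #|T| = t, T \subset e & d T = j].

Definition kprime (k t : nat) : nat :=
  'C(k, t) + \sum_(0 <= i < t.-1) 'C(k.-1, i).

Definition mprime (k m t : nat) : nat := maxn m (k * (t - 1)).+1.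

(* Main.v *)
Require Import Defs.
From mathcomp Require Import all_boot.
From mathcomp Require Import zify.

Lemma subset_of_card (T : finType) (A : {set T}) n :
  n <= #|A| -> exists2 B : {set T}, B \subset A & #|B| = n.
Proof.
move=> hn; exists [set x in take n (enum A)].
  by apply/subsetP => x; rewrite inE => /mem_take; rewrite mem_enum.
rewrite cardsE; have /card_uniqP -> := take_uniq n (enum_uniq (mem A)).
by rewrite size_takel // -cardE.
Qed.

Lemma card_fibers (V : finType) (k : nat) (c : V -> 'I_k) (e : {set V}) :
  #|e| = \sum_(a : 'I_k) #|[set v in e | c v == a]|.
Proof.
rewrite -sum1_card (partition_big c predT) //=; apply: eq_bigr => a _.
rewrite -sum1_card; apply: eq_bigl => v; by rewrite inE.
Qed.

Lemma pigeon (V : finType) (k t : nat) (c : V -> 'I_k) (e : {set V}) :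
  k * (t - 1) < #|e| -> exists a, t <= #|[set v in e | c v == a]|.
Proof.
move=> he.
case: (boolP [exists a, t <= #|[set v in e | c v == a]|]) => [/existsP//|/existsPn H].
  move: he; rewrite (@card_fibers V k c e).
  have : \sum_(a : 'I_k) #|[set v in e | c v == a]| <= \sum_(a : 'I_k) (t - 1).
    apply: leq_sum => a _; have := H a; lia.
  rewrite sum_nat_const card_ord; lia.
Qed.

Lemma card_small (k' n : nat) :
  #|[set X : {set 'I_k'} | #|X| < n]| = \sum_(0 <= i < n) 'C(k', i).
Proof.
elim: n => [|n IH].
  rewrite big_geq //; apply/eqP; rewrite cards_eq0; apply/eqP/setP => X.
  by rewrite !inE.
have -> : [set X : {set 'I_k'} | #|X| < n.+1] =
   [set X : {set 'I_k'} | #|X| < n] :|: [set X : {set 'I_k'} | #|X| == n].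
  by apply/setP => X; rewrite !inE ltnS leq_eqVlt orbC.
rewrite cardsU big_nat_recr //= -IH card_draws card_ord.
have -> : [set X : {set 'I_k'} | #|X| < n] :&: [set X : {set 'I_k'} | #|X| == n] = set0.
  apply/setP => X; rewrite !inE; apply/negbTE; apply/negP => /andP[h /eqP h2].
  by rewrite h2 ltnn in h.
by rewrite cards0 subn0.
Qed.

Definition code (V : finType) (k' t : nat) (c : V -> 'I_k'.+1) (T : {set V})
  : ({set 'I_k'.+1} + {set 'I_k'})%type :=
  if #|c @: T| == t then inl (c @: T) else
  match [pick i | 1 < #|[set v in T | c v == i]|] with
  | Some a => inr [set x | lift a x \in c @: T]
  | None => inl set0
  end.

Definition Aset (k' t : nat) : {set ({set 'I_k'.+1} + {set 'I_k'})} :=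
  (@inl _ _) @: [set S : {set 'I_k'.+1} | #|S| == t]
  :|: (@inr _ _) @: [set X : {set 'I_k'} | #|X| < t.-1].

Lemma card_Aset k' t : #|Aset k' t| = kprime k'.+1 t.
Proof.
rewrite /Aset cardsU.
have -> : (@inl _ _) @: [set S : {set 'I_k'.+1} | #|S| == t]
  :&: (@inr _ _) @: [set X : {set 'I_k'} | #|X| < t.-1] = set0.
  apply/setP => u; rewrite !inE; apply/negbTE/negP.
  by move=> /andP[/imsetP[? _ ->] /imsetP[? _]].
rewrite cards0 subn0 !card_imset; last first.
- by move=> x y [].
- by move=> x y [].
by rewrite card_draws card_ord card_small.
Qed.

Lemma edge_codes (V : finType) (E : {set {set V}}) (k' m t : nat)
  (c : V -> 'I_k'.+1) (ht : 1 < t)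
  (hc : polychromatic_vertex_coloring E m c) (e : {set V}) (he : e \in E)
  (hm : mprime k'.+1 m t <= #|e|) (u : ({set 'I_k'.+1} + {set 'I_k'})%type)
  (hu : u \in Aset k' t) :
  exists T : {set V}, [/\ #|T| = t, T \subset e & code V k' t c T = u].
Proof.
move: hm; rewrite /mprime geq_max => /andP[hm1 hm2].
have hcol := hc e he hm1.
have [v0 _] := hcol ord0.
pose f (i : 'I_k'.+1) := odflt v0 [pick v in e | c v == i].
have fP : forall i, f i \in e /\ c (f i) = i.
  move=> i; rewrite /f; case: pickP => [v /andP[h1 /eqP h2] | H] //=.
  have [v hv hcv] := hcol i.
  by have := H v; rewrite hv hcv eqxx.
case/setUP: hu => /imsetP[S]; rewrite inE => hS ->.
-
  exists (f @: S).
  have cfS : c @: (f @: S) = S.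
    rewrite -imset_comp (eq_in_imset (g := id)) ?imset_id // => i _ /=.
    by case: (fP i).
  split.
  + rewrite card_in_imset; first by apply/eqP.
    move=> i j _ _ hij; by rewrite -(proj2 (fP i)) -(proj2 (fP j)) hij.
  + by apply/subsetP => v /imsetP[i _ ->]; case: (fP i).
  + by rewrite /code cfS hS.
-
  have [a ha] := @pigeon V k'.+1 t c e hm2.
  have [W hWs hW] := @subset_of_card V _ (t - #|S|) (leq_trans (leq_subr _ _) ha).
  pose Y := [set f (lift a x) | x in S].
  have hY : #|Y| = #|S|.
    rewrite card_in_imset // => x y _ _ hxy.
    apply: (@lift_inj _ a).
    by rewrite -(proj2 (fP (lift a x))) -(proj2 (fP (lift a y))) hxy.
  have cW : forall v, v \in W -> v \in e /\ c v = a.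
    by move=> v /(subsetP hWs); rewrite inE => /andP[? /eqP].
  have cY : forall v, v \in Y -> exists2 x, x \in S & v = f (lift a x).
    by move=> v /imsetP[x hx ->]; exists x.
  exists (Y :|: W).
  have hdisj : Y :&: W = set0.
    apply/setP => v; rewrite !inE; apply/negbTE/negP => /andP[/cY[x _ ->] /cW[_]].
    by rewrite (proj2 (fP _)) => /eqP; rewrite eq_sym (negbTE (neq_lift _ _)).
  have hSt : #|S| < t.-1 := hS.
  have cT : c @: (Y :|: W) = a |: [set lift a x | x in S].
    apply/setP => i; apply/imsetP/setU1P.
    + move=> [v /setUP [/cY[x hx ->] | /cW[_ ->]] ->]; last by left.
      by right; rewrite (proj2 (fP _)); apply: imset_f.
    + move=> [-> | /imsetP[x hx ->]].
      * have : 0 < #|W| by rewrite hW; lia.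
        case/card_gt0P => w hw; exists w; first by rewrite inE hw orbT.
        by rewrite (proj2 (cW w hw)).
      * exists (f (lift a x)); first by rewrite inE; apply/orP; left; apply: imset_f.
        by rewrite (proj2 (fP _)).
  split.
  + rewrite cardsU hdisj cards0 subn0 hY hW; lia.
  + rewrite subUset; apply/andP; split; apply/subsetP => v.
    * by move=> /cY[x _ ->]; case: (fP (lift a x)).
    * by case/cW.
  + rewrite /code.
    have -> : (#|c @: (Y :|: W)| == t) = false.
      apply/negbTE; rewrite cT; apply/negP => /eqP h.
      have hl : #|[set lift a x | x in S]| = #|S|.
        by rewrite card_imset //; exact: lift_inj.
      have := cardsU1 a [set lift a x | x in S]; rewrite h hl.
      case: (a \notin _) => /= hh; move: hSt; rewrite hh ?add1n ?add0n /= ?ltnn //.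
      by move=> /leq_trans/(_ (leq_pred _)); rewrite ltnn.
    case: pickP => [i hi | H].
    * have -> : i = a.
        apply/eqP; apply/negP => /negP hia.
        move: hi; apply/negP; rewrite -leqNgt; apply/card_le1_eqP.
        move=> v w; rewrite !inE => /andP[hv /eqP hcv] /andP[hw /eqP hcw].
        move: hv hw.
        move=> /orP[/cY[x _ hvx] | /cW[_ hca]]; last by move: hia; rewrite -hcv hca eqxx.
        move=> /orP[/cY[y _ hwy] | /cW[_ hca]]; last by move: hia; rewrite -hcw hca eqxx.
        have hxy : x = y.
          apply: (@lift_inj _ a).
          by rewrite -(proj2 (fP (lift a x))) -(proj2 (fP (lift a y))) -hvx -hwy hcv hcw.
        by rewrite hvx hwy hxy.
      congr inr; apply/setP => x; rewrite inE cT !inE.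
      rewrite eq_sym (negbTE (neq_lift _ _)) /=.
      apply/imsetP/idP => [[y hy /lift_inj ->] // | hx]; by exists x.
    * have := H a; move/negbT/negP; case.
      have : W \subset [set v in Y :|: W | c v == a].
        apply/subsetP => w hw; rewrite !inE hw orbT /=.
        by rewrite (proj2 (cW w hw)).
      move/subset_leq_card; rewrite hW; lia.
Qed.

Lemma kprime_gt0 k t : 1 < t -> 0 < kprime k t.
Proof.
move=> ht; rewrite /kprime; case: t ht => [|[|t']] // _ /=.
by rewrite big_nat_recl // bin0 add1n addnS.
Qed.

Theorem proposition4 (V : finType) (E : {set {set V}}) (k m : nat) :
  (exists c : V -> 'I_k, polychromatic_vertex_coloring E m c) ->
  forall t : nat, 1 < t ->
    exists d : {set V} -> 'I_(kprime k t),
      polychromatic_tuple_coloring E t (mprime k m t) d.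
Proof.
move=> [c hc] t ht.
have hK := @kprime_gt0 k t ht.
pose j0 := Ordinal hK.
case: k c hc hK j0 => [|k'] c hc hK j0.
  exists (fun _ => j0) => e he hm j.
  have : 0 < #|e| by move: hm; rewrite /mprime geq_max => /andP[_]; apply: leq_trans.
  by case/card_gt0P => v _; case: (c v).
pose g (j : 'I_(kprime k'.+1 t)) := enum_val (cast_ord (esym (card_Aset k' t)) j).
exists (fun T => odflt j0 [pick j | g j == code V k' t c T]).
move=> e he hm j.
have [T [hT hTe hcT]] := @edge_codes V E k' m t c ht hc e he hm _ (enum_valP (cast_ord (esym (card_Aset k' t)) j)).
exists T; split => //.
case: pickP => [j' /eqP hj' | H] /=.
  apply: (cast_ord_inj (eq_n := esym (card_Aset k' t))).
  apply: enum_val_inj; by rewrite -/(g j') hj' hcT.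
by have := H j; rewrite /g hcT eqxx.
Qed.
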